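(* Let $\ell^\infty\neq0$ be a complex constant. For $k\in\{1,2\}$ let $\Sigma^{(k)}$ be finite disjoint index sets, and for $\alpha\in\Sigma^{(k)}$ let $m_\alpha\ge1$, $z_\alpha\in\mathbb C$ (pairwise distinct within each $\Sigma^{(k)}$), and $\ell^\alpha_{[p]}\in\mathbb C$ ($0\le p\le m_\alpha-1$) with $\ell^\alpha_{[m_\alpha-1]}\neq0$. Let $\chi_k(z)=\sum_{\alpha\in\Sigma^{(k)}}\sum_{p=0}^{m_\alpha-1}\frac{\ell^\alpha_{[p]}}{(z-z_\alpha)^{p+1}}$, $\varphi_k(z)=\chi_k(z)-\ell^\infty$, $M_k=\sum_{\alpha\in\Sigma^{(k)}}m_\alpha$, $M=M_1+M_2$. Assume the zeros of $\varphi_1$, labelled $\zeta^{(1)}_i$, $1\le i\le M_1$, and of $\varphi_2$, labelled $\zeta^{(2)}_i$, $M_1<i\le M$, are simple. For $\gamma\neq0$ let $\varphi_{1\otimes2,\gamma}(z)=\chi_1(z)+\chi_2(z-\gamma^{-1})-\ell^\infty$. Then for $\gamma$ small enough one can order the $M$ zeros $\zeta_i(\gamma)$ of $\varphi_{1\otimes2,\gamma}$ so that $\zeta_i(\gamma)$ is canonically associated with $\zeta^{(k)}_i$ ($k=1$ for $i\le M_1$, $k=2$ for $i>M_1$); more precisely this canonical labelling is the unique one satisfying $\zeta_i(\gamma)=\zeta^{(1)}_i+O(\gamma)$ for $i\in\{1,\dots,M_1\}$ and $\zeta_i(\gamma)=\frac1\gamma+\zeta^{(2)}_i+O(\gamma)$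 for $i\in\{M_1+1,\dots,M\}$. Moreover, for $\gamma$ small enough these zeros are simple. *)

(* Defs.v *)
From mathcomp Require Import all_boot all_order all_algebra.
From mathcomp Require Import complex.
From mathcomp Require Import reals.
Set Implicit Arguments. Unset Strict Implicit. Unset Printing Implicit Defensive.
Import Order.TTheory GRing.Theory Num.Theory.
Local Open Scope ring_scope.

Section Defs.
Variable R : realType.
Local Notation C := R[i].

Definition rC (x : R) : C := Complex x 0.

Definition chi (S : finType) (m : S -> nat) (zp : S -> C) (l : S -> nat -> C)
  (x : C) : C :=
  \sum_(a : S) \sum_(p < m a) l a p / (x - zp a) ^+ p.+1.

(* its derivative (valid away from the poles):
   chi'(z) = sum sum -(p+1) l^alpha_[p] / (z - z_alpha)^(p+2) *)
Definition dchi (S : finType) (m : S -> nat) (zp : S -> C) (l : S -> nat -> C)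
  (x : C) : C :=
  \sum_(a : S) \sum_(p < m a) - (p.+1)%:R * l a p / (x - zp a) ^+ p.+2.

Definition phi (S : finType) m zp l (linf : C) (x : C) : C := @chi S m zp l x - linf.

Definition phi12 (S1 : finType) m1 zp1 l1 (S2 : finType) m2 zp2 l2 (linf gam x : C) : C :=
  @chi S1 m1 zp1 l1 x + @chi S2 m2 zp2 l2 (x - gam^-1) - linf.

Definition dphi12 (S1 : finType) m1 zp1 l1 (S2 : finType) m2 zp2 l2 (gam x : C) : C :=
  @dchi S1 m1 zp1 l1 x + @dchi S2 m2 zp2 l2 (x - gam^-1).

Definition is_zero1 (S : finType) m (zp : S -> C) l linf (x : C) : Prop :=
  (forall a, x != zp a) /\ @phi S m zp l linf x = 0.

Definition simple_zero1 (S : finType) m (zp : S -> C) l linf (x : C) : Prop :=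
  @is_zero1 S m zp l linf x /\ @dchi S m zp l x != 0.

Definition is_zero12 (S1 : finType) m1 (zp1 : S1 -> C) l1 (S2 : finType) m2 (zp2 : S2 -> C) l2
  (linf gam x : C) : Prop :=
  (forall a, x != zp1 a) /\ (forall b, x != zp2 b + gam^-1) /\
  @phi12 S1 m1 zp1 l1 S2 m2 zp2 l2 linf gam x = 0.

Definition simple_zero12 (S1 : finType) m1 (zp1 : S1 -> C) l1 (S2 : finType) m2 (zp2 : S2 -> C) l2
  (linf gam x : C) : Prop :=
  @is_zero12 S1 m1 zp1 l1 S2 m2 zp2 l2 linf gam x /\
  @dphi12 S1 m1 zp1 l1 S2 m2 zp2 l2 gam x != 0.

Definition labelling (n : nat) (Z : C -> Prop) (zeta : 'I_n -> C) : Prop :=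
  injective zeta /\ (forall i, Z (zeta i)) /\ (forall x, Z x -> exists i, zeta i = x).

End Defs.

(* Submission.v *)
Require Import Defs.
From mathcomp Require Import all_boot all_order all_algebra.
From mathcomp Require Import complex.
From mathcomp Require Import reals.
From mathcomp Require Import ring lra.
From Stdlib Require Import ClassicalEpsilon FunctionalExtensionality.
Import Order.TTheory GRing.Theory Num.Theory.
Local Open Scope ring_scope.
Local Open Scope complex_scope.
Set Implicit Arguments. Unset Strict Implicit. Unset Printing Implicit Defensive.

Section NC.
Variable R : realType.
Local Notation C := R[i].
Implicit Types x y z : C.

Definition nc (z : C) : R := complex.Re `|z|.

Lemma ncE z : `|z| = (nc z)%:C.
Proof. by rewrite /nc RRe_real ?normr_real. Qed.

Lemma nc_ge0 z : 0 <= nc z.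
Proof. by rewrite -ler0c -ncE. Qed.

Lemma nc0 : nc 0 = 0.
Proof. by apply: complexI; rewrite -ncE normr0. Qed.

Lemma nc_eq0 z : (nc z == 0) = (z == 0).
Proof. by rewrite -(inj_eq (@complexI R)) -ncE rmorph0 normr_eq0. Qed.

Lemma nc_gt0 z : z != 0 -> 0 < nc z.
Proof. by move=> h; rewrite lt_def nc_ge0 nc_eq0 h. Qed.

Lemma ncM x y : nc (x * y) = nc x * nc y.
Proof. by apply: complexI; rewrite rmorphM /= -!ncE normrM. Qed.

Lemma ncV x : nc (x^-1) = (nc x)^-1.
Proof.
have [->|x0] := eqVneq x 0; first by rewrite invr0 nc0 invr0.
have h : nc x != 0 by rewrite nc_eq0.
apply: (mulfI h); rewrite -ncM divff // mulfV //.
by apply: complexI; rewrite -ncE normr1.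
Qed.

Lemma ncX x n : nc (x ^+ n) = nc x ^+ n.
Proof. by apply: complexI; rewrite rmorphXn /= -!ncE normrX. Qed.

Lemma ncN x : nc (- x) = nc x.
Proof. by rewrite /nc normrN. Qed.

Lemma ncB x y : nc (x - y) = nc (y - x).
Proof. by rewrite -ncN opprB. Qed.

Lemma ncD x y : nc (x + y) <= nc x + nc y.
Proof. by rewrite -lecR rmorphD /= -!ncE ler_normD. Qed.

Lemma ncDr x y : nc x - nc y <= nc (x + y).
Proof.
have := ncD (x + y) (- y); rewrite addrK ncN => h.
by rewrite lerBlDr.
Qed.

Lemma ncBr x y : nc x - nc y <= nc (x - y).
Proof. by rewrite -(ncN y) ncDr. Qed.

Lemma ncR (r : R) : nc (r%:C) = `|r|.
Proof.
apply: complexI; rewrite -ncE.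
have [h|h] := ger0P r.
  by rewrite ger0_norm ?ger0_norm ?ler0c.
by rewrite !ltr0_norm ?ltcR // rmorphN.
Qed.

Lemma nc_nat n : nc (n%:R) = n%:R.
Proof. by apply: complexI; rewrite -ncE normr_nat rmorph_nat. Qed.

Lemma nc_sum (I : Type) (s : seq I) (P : pred I) (F : I -> C) :
  nc (\sum_(i <- s | P i) F i) <= \sum_(i <- s | P i) nc (F i).
Proof.
elim: s => [|a s IH]; first by rewrite !big_nil nc0.
rewrite !big_cons; case: (P a) => //.
by apply: le_trans (ncD _ _) _; rewrite lerD2l.
Qed.

End NC.

Section EV.
Variable R : realType.
Local Notation C := R[i].
Local Notation nc := (@nc R).

Definition ev (P : C -> Prop) :=
  exists2 d : R, 0 < d & forall g : C, g != 0 -> nc g < d -> P g.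

Lemma ev_and P Q : ev P -> ev Q -> ev (fun g => P g /\ Q g).
Proof.
move=> [d1 d1p H1] [d2 d2p H2]; exists (Num.min d1 d2); first by rewrite lt_min d1p.
by move=> g g0; rewrite lt_min => /andP[h1 h2]; split; [apply: H1|apply: H2].
Qed.

Lemma ev_mono (P Q : C -> Prop) : (forall g, g != 0 -> P g -> Q g) -> ev P -> ev Q.
Proof. by move=> PQ [d dp H]; exists d => // g g0 h; apply: PQ => //; apply: H. Qed.

Lemma ev_le c : 0 < c -> ev (fun g => nc g <= c).
Proof. by move=> cp; exists c => // g _ /ltW. Qed.

Lemma ev_true : ev (fun _ => True).
Proof. by exists 1. Qed.

Lemma ev_seq (T : eqType) (s : seq T) (P : T -> C -> Prop) :
  (forall a, a \in s -> ev (P a)) -> ev (fun g => forall a, a \in s -> P a g).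
Proof.
elim: s => [|a s IH] H.
  by exists 1 => // g _ _ a; rewrite in_nil.
have h1 := H a (mem_head _ _).
have h2 : ev (fun g => forall b, b \in s -> P b g).
  by apply: IH => b bs; apply: H; rewrite in_cons bs orbT.
apply: (ev_mono _ (ev_and h1 h2)) => g _ [Ha Hs] b; rewrite in_cons => /orP[/eqP->//|].
exact: Hs.
Qed.

Lemma ev_fin (T : finType) (P : T -> C -> Prop) :
  (forall a, ev (P a)) -> ev (fun g => forall a, P a g).
Proof.
move=> H; have := @ev_seq T (enum T) P (fun a _ => H a).
apply: ev_mono => g _ h a; apply: h; by rewrite mem_enum.
Qed.

Lemma ev_neg P : ev P -> ev (fun g => P (- g)).
Proof.
move=> [d dp H]; exists d => // g g0 h; apply: H; first by rewrite oppr_eq0.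
by rewrite ncN.
Qed.

Lemma ncg_inv (g : C) : g != 0 -> nc (g^-1) = (nc g)^-1.
Proof. by move=> _; rewrite ncV. Qed.

Lemma ev_far (y : C) : ev (fun g => 1 + (2 * nc g)^-1 <= nc (y - g^-1)).
Proof.
have p : 0 < (2 * nc y + 2)^-1.
  by rewrite invr_gt0; have := nc_ge0 y; lra.
exists (2 * nc y + 2)^-1 => // g g0 h.
have g0' := nc_gt0 g0.
have h1 : 2 * nc y + 2 <= (nc g)^-1.
  rewrite -[X in X <= _]invrK lef_pV2 ?posrE ?invr_gt0 //; first exact: ltW.
  by have := nc_ge0 y; lra.
have h2 := ncBr (g^-1) y; rewrite ncV ncB in h2.
rewrite invfM.
set u := (nc g)^-1 in h1 h2 *.
have := nc_ge0 y; lra.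
Qed.

End EV.

Section GS.
Variable R : realType.
Local Notation C := R[i].
Local Notation nc := (@nc R).

Definition GS (T : finType) (m : T -> nat) (zp : T -> C) (d : T -> nat -> C)
  (k : nat) (x : C) : C :=
  \sum_(a : T) \sum_(p < m a) d a p / (x - zp a) ^+ (p + k).+1.

Lemma chiGS (T : finType) m zp l x : @chi R T m zp l x = GS m zp l 0 x.
Proof. by apply: eq_bigr => a _; apply: eq_bigr => p _; rewrite addn0. Qed.

Lemma dchiGS (T : finType) m zp l x :
  @dchi R T m zp l x = GS m zp (fun a p => - (p.+1)%:R * l a p) 1 x.
Proof. by apply: eq_bigr => a _; apply: eq_bigr => p _; rewrite addn1. Qed.

Lemma le_sum_term (T : finType) (F : T -> R) a :
  (forall b, 0 <= F b) -> F a <= \sum_b F b.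
Proof.
move=> H; rewrite (bigD1 a) //= lerDl; exact: sumr_ge0.
Qed.

Lemma GS_decay (T : finType) m zp d k :
  exists B R0 : R, [/\ 0 <= B, 0 < R0 &
    forall w, R0 <= nc w -> nc (@GS T m zp d k w) * nc w <= B].
Proof.
set S := \sum_(a : T) nc (zp a).
have S0 : 0 <= S by apply: sumr_ge0 => a _; exact: nc_ge0.
exists (\sum_(a : T) \sum_(p < m a) 2 * nc (d a p)), (2 * S + 2); split.
- by do 2! (apply: sumr_ge0 => ? _); rewrite mulr_ge0 ?nc_ge0.
- lra.
move=> w hw.
have w0 : 0 <= nc w := nc_ge0 w.
apply: le_trans (ler_wpM2r w0 (nc_sum _ _ _)) _.
rewrite mulr_suml; apply: ler_sum => a _.
apply: le_trans (ler_wpM2r w0 (nc_sum _ _ _)) _.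
rewrite mulr_suml; apply: ler_sum => p _.
have za : nc (zp a) <= S.
  by rewrite /S; apply: (le_sum_term a) => b; exact: nc_ge0.
have h1 : nc w / 2 + 1 <= nc (w - zp a).
  by have := ncBr w (zp a); lra.
set y := w - zp a in h1 *.
have y1 : 1 <= nc y by have := nc_ge0 w; lra.
have hy : nc y <= nc (y ^+ (p + k).+1).
  by rewrite ncX exprS ler_peMr ?nc_ge0 // exprn_ege1.
have yp : 0 < nc (y ^+ (p + k).+1) by lra.
rewrite ncM ncV -mulrA mulrC ler_wpM2r ?nc_ge0 //.
by rewrite mulrC ler_pdivrMr //; lra.
Qed.

End GS.

Section Poly.
Variable R : realType.
Local Notation C := R[i].

Lemma deriv_sum (I : Type) (s : seq I) (P : pred I) (F : I -> {poly C}) :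
  (\sum_(i <- s | P i) F i)^`() = \sum_(i <- s | P i) (F i)^`().
Proof.
elim: s => [|a s IH]; first by rewrite !big_nil deriv0.
by rewrite !big_cons; case: (P a); rewrite ?derivD IH.
Qed.

Lemma logderiv (I : eqType) (s : seq I) (F : I -> {poly C}) (x : C) :
  (forall i, i \in s -> (F i).[x] != 0) ->
  (\prod_(i <- s) F i)^`().[x] =
  (\prod_(i <- s) F i).[x] * \sum_(i <- s) (F i)^`().[x] / (F i).[x].
Proof.
elim: s => [|a s IH] H; first by rewrite !big_nil mulr0 -polyC1 derivC horner0.
rewrite !big_cons derivM !hornerE IH; last by move=> i iS; apply: H; rewrite in_cons iS orbT.
have := H a (mem_head _ _); set u := (F a).[x]; set P := (\prod_(j <- s) F j).[x] => hu.
set S := \sum_(j <- s) _.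
by field; rewrite hu.
Qed.

Variables (T : finType) (m : T -> nat) (zp : T -> C) (c : T -> nat -> C) (linf : C).

Definition Dp : {poly C} := \prod_(a : T) ('X - (zp a)%:P) ^+ (m a).
Definition Qp : {poly C} :=
  \sum_(a : T) \sum_(p < m a) c a p *: (Dp %/ ('X - (zp a)%:P) ^+ p.+1) - linf *: Dp.

Definition Msum := (\sum_(a : T) m a)%N.

Lemma dvd_term a p : (p < m a)%N -> ('X - (zp a)%:P) ^+ p.+1 %| Dp.
Proof.
move=> hp; rewrite /Dp (bigD1 a) //=; apply: dvdp_mulr; exact: dvdp_exp2l.
Qed.

Lemma Dp_eval x : (forall a, x != zp a) -> Dp.[x] != 0.
Proof.
move=> H; rewrite /Dp horner_prod; apply/prodf_neq0 => a _.
by rewrite horner_exp hornerXsubC expf_neq0 // subr_eq0.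
Qed.

Lemma term_eval a p x : (p < m a)%N -> x != zp a ->
  (Dp %/ ('X - (zp a)%:P) ^+ p.+1).[x] = Dp.[x] / (x - zp a) ^+ p.+1.
Proof.
move=> hp hx; have := divpK (dvd_term hp).
set E := Dp %/ _ => hE.
have u0 : (x - zp a) ^+ p.+1 != 0 by rewrite expf_neq0 // subr_eq0.
by rewrite -[in RHS]hE hornerM horner_exp hornerXsubC mulfK.
Qed.

Lemma term_deriv a p x : (p < m a)%N -> x != zp a ->
  (Dp %/ ('X - (zp a)%:P) ^+ p.+1)^`().[x] =
  Dp^`().[x] / (x - zp a) ^+ p.+1 + Dp.[x] * (- (p.+1)%:R / (x - zp a) ^+ p.+2).
Proof.
move=> hp hx; have hev := term_eval hp hx; have := divpK (dvd_term hp).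
set E := Dp %/ _ in hev * => hE.
have -> : Dp^`().[x] = E^`().[x] * (x - zp a) ^+ p.+1 + E.[x] * ((x - zp a) ^+ p *+ p.+1).
  by rewrite -[in LHS]hE derivM deriv_exp derivXsubC mul1r !hornerE hornerMn horner_exp hornerXsubC.
rewrite hev.
have u0 : x - zp a != 0 by rewrite subr_eq0.
set u := x - zp a in u0 *.
rewrite !exprS -mulr_natl.
set n : C := (p.+1)%:R.
have v0 : u ^+ p != 0 by rewrite expf_neq0.
set v := u ^+ p in v0 *.
by field; rewrite v0 u0.
Qed.

Lemma Qp_eval x : (forall a, x != zp a) ->
  Qp.[x] = Dp.[x] * (chi m zp c x - linf).
Proof.
move=> H; rewrite /Qp /chi !hornerE horner_sum mulrBr mulr_sumr; congr (_ - _); last exact: mulrC.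
apply: eq_bigr => a _; rewrite horner_sum mulr_sumr; apply: eq_bigr => p _.
by rewrite hornerE term_eval // mulrCA mulrA.
Qed.

Lemma Qp_deriv x : (forall a, x != zp a) ->
  Qp^`().[x] = Dp^`().[x] * (chi m zp c x - linf) + Dp.[x] * dchi m zp c x.
Proof.
move=> H; rewrite /Qp /chi /dchi derivB derivZ deriv_sum !hornerE horner_sum.
rewrite mulrBr !mulr_sumr addrAC -big_split /=; congr (_ - _); last exact: mulrC.
apply: eq_bigr => a _; rewrite deriv_sum horner_sum !mulr_sumr -big_split /=.
apply: eq_bigr => p _; rewrite derivZ hornerE term_deriv //.
by ring.
Qed.


End Poly.

Section Poly2.
Variable R : realType.
Local Notation C := R[i].
Local Notation nc := (@nc R).
Variables (T : finType) (m : T -> nat) (zp : T -> C) (c : T -> nat -> C) (linf : C).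

Local Notation Dp := (Dp m zp).
Local Notation Qp := (Qp m zp c linf).
Local Notation Msum := (Msum m).

Lemma size_Dp : size Dp = Msum.+1.
Proof.
rewrite /Dp size_prod; last by move=> a _; rewrite expf_neq0 // polyXsubC_eq0.
under eq_bigr do rewrite size_exp_XsubC -addn1.
by rewrite big_split /= sum1_card -addSn addnK.
Qed.

Lemma Qp_size : linf != 0 -> size Qp = Msum.+1.
Proof.
move=> l0; rewrite /Qp addrC size_addl; rewrite size_polyN size_scale // size_Dp //.
apply: (@big_ind _ (fun q : {poly C} => (size q <= Msum)%N)).
- by rewrite size_poly0.
- by move=> p q hp hq; apply: leq_trans (size_polyD _ _) _; rewrite geq_max hp hq.
move=> a _.
apply: (@big_ind _ (fun q : {poly C} => (size q <= Msum)%N)).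
- by rewrite size_poly0.
- by move=> p q hp hq; apply: leq_trans (size_polyD _ _) _; rewrite geq_max hp hq.
move=> p _; apply: leq_trans (size_scale_leq _ _) _.
rewrite size_divp ?expf_neq0 ?polyXsubC_eq0 // size_Dp size_exp_XsubC /=.
by rewrite subSS leq_subr.
Qed.

Lemma Qp_neq0 : linf != 0 -> Qp != 0.
Proof. by move=> l0; rewrite -size_poly_eq0 Qp_size. Qed.

Lemma Dp_logderiv x : (forall a, x != zp a) ->
  Dp^`().[x] = Dp.[x] * \sum_(a : T) (m a)%:R / (x - zp a).
Proof.
move=> H; rewrite /Submission.Dp logderiv; last first.
  by move=> a _; rewrite horner_exp hornerXsubC expf_neq0 // subr_eq0.
congr (_ * _); apply: eq_bigr => a _.
rewrite deriv_exp derivXsubC mul1r hornerMn !horner_exp hornerXsubC.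
have u0 : x - zp a != 0 by rewrite subr_eq0.
case: (m a) => [|n]; first by rewrite mulr0n !mul0r.
by rewrite -mulr_natl exprS /=; field; rewrite u0 expf_neq0.
Qed.

End Poly2.

Section Close.
Variable R : realType.
Local Notation C := R[i].
Local Notation nc := (@nc R).

Lemma sum_le_const (s : seq C) (F : C -> R) (K : R) :
  (forall r, r \in s -> F r <= K) -> \sum_(r <- s) F r <= (size s)%:R * K.
Proof.
elim: s => [|a s IH] H; first by rewrite big_nil mul0r.
rewrite big_cons /= -addn1 natrD mulrDl mul1r addrC lerD //.
  by apply: IH => r rs; apply: H; rewrite in_cons rs orbT.
by apply: H; rewrite mem_head.
Qed.

Lemma root_close (s : seq C) (w : C) (L : R) : 0 < L ->
  L <= nc (\sum_(r <- s) (w - r)^-1) ->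
  exists2 r, r \in s & nc (w - r) * L <= 2 * (size s)%:R.
Proof.
move=> L0 HL.
case: (boolP (has (fun r => nc (w - r) * L <= 2 * (size s)%:R) s)).
  by case/hasP => r rs hr; exists r.
move/hasPn => H; exfalso.
case: s HL H => [|a s'] HL H.
  by rewrite big_nil nc0 in HL; lra.
set s := a :: s' in HL H.
have n0 : (0 < (size s)%:R :> R) by rewrite ltr0n.
have : nc (\sum_(r <- s) (w - r)^-1) <= (size s)%:R * (L / (2 * (size s)%:R)).
  apply: le_trans (nc_sum _ _ _) _; apply: sum_le_const => r rs.
  have := H r rs; rewrite -ltNge => hr.
  have p : 0 < nc (w - r).
    rewrite lt_def nc_ge0 andbT; apply/eqP => e; move: hr; rewrite e mul0r.
    lra.
  have n2 : 0 < 2 * (size s)%:R :> R by rewrite mulr_gt0.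
  rewrite ncV ler_pdivlMr // mulrC ler_pdivrMr // mulrC.
  by rewrite [_ * 2]mulrC [L * _]mulrC ltW.
have -> : (size s)%:R * (L / (2 * (size s)%:R)) = L / 2.
  by field; rewrite gt_eqF.
lra.
Qed.

End Close.

Section Far.
Variable R : realType.
Local Notation C := R[i].
Local Notation nc := (@nc R).

Lemma decay_far (F : C -> C) (B R0 : R) (y : C) : 0 < R0 -> 0 <= B ->
  (forall w, R0 <= nc w -> nc (F w) * nc w <= B) ->
  ev (fun g => nc (F (y - g^-1)) <= 2 * B * nc g).
Proof.
move=> R0p B0 H.
have p : 0 < (2 * R0)^-1 by rewrite invr_gt0; lra.
apply: ev_mono (ev_and (ev_far y) (ev_le p)) => g g0 [h1 h2].
have G0 := nc_gt0 g0.
set w := y - g^-1 in h1 *.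
have h3 : R0 <= (2 * nc g)^-1.
  move: h2; rewrite -[(2 * R0)^-1]mul1r ler_pdivlMr; last lra.
  rewrite -[(2 * nc g)^-1]mul1r ler_pdivlMr; last lra.
  by have -> : R0 * (2 * nc g) = nc g * (2 * R0) by ring.
have h4 : 1 <= 2 * nc g * nc w.
  have h5 : (2 * nc g)^-1 <= nc w.
    have : 0 <= 1 :> R by []. lra.
  move: h5; rewrite -[(2 * nc g)^-1]mul1r ler_pdivrMr; last lra.
  by rewrite mulrC.
have wp : 0 < nc w by lra.
have hB : nc (F w) * nc w <= B by apply: H; lra.
rewrite -(ler_pM2r wp); apply: le_trans hB _.
rewrite -mulrA; have : B * 1 <= B * (2 * nc g * nc w) by rewrite ler_wpM2l.
by rewrite mulr1 !mulrA [B * 2]mulrC.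
Qed.

End Far.

Section SumType.
Variable R : realType.
Local Notation C := R[i].
Local Notation nc := (@nc R).
Variables (S1 S2 : finType) (m1 : S1 -> nat) (zp1 : S1 -> C) (l1 : S1 -> nat -> C)
  (m2 : S2 -> nat) (zp2 : S2 -> C) (l2 : S2 -> nat -> C) (linf : C).

Definition mT : S1 + S2 -> nat := fun t => match t with inl a => m1 a | inr b => m2 b end.
Definition zpT (g : C) : S1 + S2 -> C :=
  fun t => match t with inl a => zp1 a | inr b => zp2 b + g^-1 end.
Definition lT : S1 + S2 -> nat -> C := fun t => match t with inl a => l1 a | inr b => l2 b end.

Lemma chiT g x : chi mT (zpT g) lT x = chi m1 zp1 l1 x + chi m2 zp2 l2 (x - g^-1).
Proof.
rewrite /chi big_sumType /=; congr (_ + _); apply: eq_bigr => b _.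
by apply: eq_bigr => p _; rewrite opprD addrA [x - _ - _]addrAC.
Qed.

Lemma dchiT g x : dchi mT (zpT g) lT x = dchi m1 zp1 l1 x + dchi m2 zp2 l2 (x - g^-1).
Proof.
rewrite /dchi big_sumType /=; congr (_ + _); apply: eq_bigr => b _.
by apply: eq_bigr => p _; rewrite opprD addrA [x - _ - _]addrAC.
Qed.

Lemma MsumT : Msum mT = (\sum_(a : S1) m1 a + \sum_(b : S2) m2 b)%N.
Proof. by rewrite /Msum big_sumType. Qed.

Lemma zeroT g x : is_zero12 m1 zp1 l1 m2 zp2 l2 linf g x <->
  (forall t, x != zpT g t) /\ chi mT (zpT g) lT x - linf = 0.
Proof.
split.
  move=> [h1 [h2 h3]]; split; first by case.
  by rewrite chiT.
move=> [h1 h2]; split; first by move=> a; exact: (h1 (inl a)).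
split; first by move=> b; exact: (h1 (inr b)).
by rewrite /phi12 -chiT.
Qed.

Lemma dphiT g x : dphi12 m1 zp1 l1 m2 zp2 l2 g x = dchi mT (zpT g) lT x.
Proof. by rewrite /dphi12 dchiT. Qed.

End SumType.

Section Cluster.
Variable R : realType.
Local Notation C := R[i].
Local Notation nc := (@nc R).
Variables (S1 S2 : finType) (m1 : S1 -> nat) (zp1 : S1 -> C) (l1 : S1 -> nat -> C)
  (m2 : S2 -> nat) (zp2 : S2 -> C) (l2 : S2 -> nat -> C) (linf : C).

Local Notation mT := (mT m1 m2).
Local Notation zpT := (zpT zp1 zp2).
Local Notation lT := (lT l1 l2).

Lemma nc_shift (y z g : C) : nc (y - (z + g^-1)) = nc (y - z - g^-1).
Proof. by rewrite opprD addrA. Qed.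

Lemma cluster (zeta : C) : linf != 0 -> (forall a, zeta != zp1 a) ->
  chi m1 zp1 l1 zeta = linf -> dchi m1 zp1 l1 zeta != 0 ->
  exists K : R, 0 <= K /\ ev (fun g => exists r,
    is_zero12 m1 zp1 l1 m2 zp2 l2 linf g r /\ nc (r - zeta) <= K * nc g).
Proof.
move=> l0 hz hphi hd.
set A := nc (dchi m1 zp1 l1 zeta).
have A0 : 0 < A by exact: nc_gt0.
have [B2 [R2 [B20 R20 HB2]]] := GS_decay m2 zp2 l2 0.
have [B3 [R3 [B30 R30 HB3]]] := GS_decay m2 zp2 (fun a p => - (p.+1)%:R * l2 a p) 1.
set E : R := 2 * (B2 + 1).
have E0 : 0 < E by rewrite /E; lra.
set BD : R := \sum_(a : S1) (m1 a)%:R / nc (zeta - zp1 a) + \sum_(b : S2) (m2 b)%:R.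
have BD0 : 0 <= BD.
  rewrite /BD addr_ge0 //; apply: sumr_ge0 => a _ //.
  by rewrite divr_ge0 ?nc_ge0.
set Mt : nat := (\sum_(a : S1) m1 a + \sum_(b : S2) m2 b)%N.
set K : R := 8 * Mt%:R * E / A.
have K0 : 0 <= K.
  by rewrite /K divr_ge0 ?mulr_ge0 ?ler0n //; lra.
exists K; split => //.
have ev1 := @decay_far R (chi m2 zp2 l2) B2 R2 zeta R20 B20
  (fun w hw => ltac:(rewrite chiGS; exact: HB2)).
have ev2 := @decay_far R (dchi m2 zp2 l2) B3 R3 zeta R30 B30
  (fun w hw => ltac:(rewrite dchiGS; exact: HB3)).
have ev3 : ev (fun g => nc g <= A / (4 * B3 + 1)).
  by apply: ev_le; rewrite divr_gt0 //; lra.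
have ev4 := ev_fin (fun b => ev_far (zeta - zp2 b)).
have ev5 : ev (fun g => nc g <= A / (4 * E * (BD + 1))).
  by apply: ev_le; rewrite divr_gt0 // !mulr_gt0 //; lra.
have ev6 : ev (fun g => forall a, nc g <= nc (zeta - zp1 a) / (2 * (K + 1))).
  apply: ev_fin => a; apply: ev_le; rewrite divr_gt0 ?nc_gt0 ?subr_eq0 //; lra.
have ev7 : ev (fun g => nc g <= (2 * (K + 1))^-1).
  by apply: ev_le; rewrite invr_gt0; lra.
apply: ev_mono (ev_and ev1 (ev_and ev2 (ev_and ev3 (ev_and ev4 (ev_and ev5 (ev_and ev6 ev7))))))
  => g g0 [h1 [h2 [h3 [h4 [h5 [h6 h7]]]]]].
have G0 : 0 < nc g := nc_gt0 g0.
have hb1 : forall b, 1 <= nc (zeta - zp2 b - g^-1).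
  move=> b; have := h4 b; have : 0 <= (2 * nc g)^-1 by rewrite invr_ge0; lra.
  lra.
have hpz : forall t, zeta != zpT g t.
  case=> [a|b] /=; first exact: hz.
  rewrite -subr_eq0; apply/negP => /eqP e.
  by have := hb1 b; rewrite -nc_shift e nc0; lra.
set Q := Qp mT (zpT g) lT linf.
set D := Dp mT (zpT g).
have DZ := Dp_eval mT hpz.
have Qz := Qp_eval mT lT linf hpz.
rewrite chiT hphi addrAC subrr add0r in Qz.
have [Q0|Qn0] := eqVneq Q.[zeta] 0.
  exists zeta; split; last by rewrite subrr nc0 mulr_ge0 // ltW.
  apply/zeroT; split => //; rewrite chiT hphi addrAC subrr add0r.
  by move: Q0; rewrite Qz => /eqP; rewrite mulf_eq0 (negbTE DZ) => /eqP.
have phi0 : chi m2 zp2 l2 (zeta - g^-1) != 0.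
  by apply: contra Qn0; rewrite Qz => /eqP ->; rewrite mulr0.
set phz := chi m2 zp2 l2 (zeta - g^-1) in Qz phi0 h1.
have [rs Qrs] := closed_field_poly_normal Q.
have lc0 : lead_coef Q != 0 by rewrite lead_coef_eq0 Qp_neq0.
have Qsize : size Q = Mt.+1 by rewrite Qp_size // MsumT.
have rsize : size rs = Mt.
  by move: Qsize; rewrite Qrs size_scale // size_prod_XsubC => -[].
set P := \prod_(z <- rs) ('X - z%:P) in Qrs.
have PQ : forall x, Q.[x] = lead_coef Q * P.[x] by move=> x; rewrite {1}Qrs hornerZ.
have PQ' : forall x, Q^`().[x] = lead_coef Q * P^`().[x].
  by move=> x; rewrite {1}Qrs derivZ hornerZ.
have Pz : P.[zeta] != 0 by apply: contra Qn0; rewrite PQ => /eqP ->; rewrite mulr0.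
have rsz : forall z, z \in rs -> ('X - z%:P).[zeta] != 0.
  move=> z zr; rewrite hornerXsubC; apply: contra Pz => /eqP e.
  by rewrite -/(root P zeta) root_prod_XsubC -(subr0 zeta) -e opprB addrC subrK.
have HP := logderiv rsz.
have HS0 : Q^`().[zeta] = Q.[zeta] * \sum_(z <- rs) (zeta - z)^-1.
  rewrite PQ PQ' HP -mulrA; congr (_ * (_ * _)).
  by apply: eq_bigr => z _; rewrite derivXsubC hornerXsubC hornerC div1r.
have HS : \sum_(z <- rs) (zeta - z)^-1 = Q^`().[zeta] / Q.[zeta].
  by rewrite HS0 mulrAC divff ?mul1r.
set df := dchi m1 zp1 l1 zeta + dchi m2 zp2 l2 (zeta - g^-1).
set LD := \sum_(t : S1 + S2) (mT t)%:R / (zeta - zpT g t).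
have HS2 : \sum_(z <- rs) (zeta - z)^-1 = LD + df / phz.
  rewrite HS (Qp_deriv mT lT linf hpz) (Dp_logderiv mT hpz) dchiT chiT hphi.
  rewrite addrAC subrr add0r Qz -/LD -/df -/D.
  rewrite -/phz; by field; rewrite DZ phi0.
have hLD : nc LD <= BD.
  apply: le_trans (nc_sum _ _ _) _; rewrite big_sumType /=; apply: lerD.
    by apply: ler_sum => a _; rewrite ncM ncV nc_nat.
  apply: ler_sum => b _; rewrite ncM ncV nc_nat nc_shift.
  apply: ler_piMr => //; rewrite invf_le1 //; have := hb1 b; lra.
have hphz : nc phz <= E * nc g.
  have : E * nc g = 2 * B2 * nc g + 2 * nc g by rewrite /E; ring.
  lra.
have phz0 : 0 < nc phz by exact: nc_gt0.
have hdf : A / 2 <= nc df.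
  have e1 := ncDr (dchi m1 zp1 l1 zeta) (dchi m2 zp2 l2 (zeta - g^-1)).
  have e2 : nc g * (4 * B3 + 1) <= A by rewrite -ler_pdivlMr //; lra.
  have e3 : nc g * (4 * B3 + 1) = 2 * (2 * B3 * nc g) + nc g by ring.
  rewrite -/A -/df in e1; lra.
have hq : (A / 2) / (E * nc g) <= nc (df / phz).
  rewrite ncM ncV; apply: ler_pM => //; first lra.
    by rewrite invr_ge0 mulr_ge0 // ltW.
  by rewrite lef_pV2 // posrE // mulr_gt0.
set L := A / (4 * E * nc g).
have L0 : 0 < L.
  by rewrite /L divr_gt0 // !mulr_gt0 //; lra.
have hL1 : BD + 1 <= L.
  rewrite /L ler_pdivlMr; last by rewrite !mulr_gt0 //; lra.
  have e2 : nc g * (4 * E * (BD + 1)) <= A by rewrite -ler_pdivlMr ?mulr_gt0 //; lra.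
  by have -> : (BD + 1) * (4 * E * nc g) = nc g * (4 * E * (BD + 1)) by ring.
have hL2 : (A / 2) / (E * nc g) = 2 * L.
  by rewrite /L; field; rewrite !gt_eqF.
have hS : L <= nc (\sum_(z <- rs) (zeta - z)^-1).
  rewrite HS2 addrC; have := ncDr (df / phz) LD; lra.
have [r rin hr] := root_close L0 hS.
have hKG : nc (zeta - r) <= K * nc g.
  have -> : K * nc g = 2 * Mt%:R / L by rewrite /K /L; field; rewrite !gt_eqF.
  by rewrite ler_pdivlMr // -rsize.
have KG0 : 0 <= K * nc g by rewrite mulr_ge0 // ltW.
exists r; split; last by rewrite ncB.
have hpr : forall t, r != zpT g t.
  case=> [a|b] /=; rewrite -subr_eq0.
    have e1 := ncBr (zeta - zp1 a) (zeta - r).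
    have -> : r - zp1 a = zeta - zp1 a - (zeta - r) by ring.
    rewrite -nc_eq0; apply: lt0r_neq0.
    have e2 := h6 a; move: e2; rewrite ler_pdivlMr; last lra.
    have -> : nc g * (2 * (K + 1)) = 2 * (K * nc g) + 2 * nc g by ring.
    lra.
  have e1 := ncBr (zeta - zp2 b - g^-1) (zeta - r).
  have -> : r - (zp2 b + g^-1) = zeta - zp2 b - g^-1 - (zeta - r) by ring.
  rewrite -nc_eq0; apply: lt0r_neq0.
  have e2 := h7; move: e2; rewrite -[(2 * (K + 1))^-1]mul1r ler_pdivlMr; last lra.
  have -> : nc g * (2 * (K + 1)) = 2 * (K * nc g) + 2 * nc g by ring.
  have := hb1 b; lra.
apply/zeroT; split => //.
have Qr : Q.[r] = 0.
  by rewrite PQ; apply/eqP; rewrite mulf_eq0 -/(root P r) root_prod_XsubC rin orbT.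
move: Qr; rewrite (Qp_eval mT lT linf hpr) => /eqP; rewrite mulf_eq0.
by rewrite (negbTE (Dp_eval mT hpr)) => /eqP.
Qed.




End Cluster.

Section Unif.
Variable R : realType.
Local Notation C := R[i].
Local Notation nc := (@nc R).

Lemma unif_seq (I : eqType) (s : seq I) (P : I -> R -> C -> Prop) :
  (forall i K K' g, K <= K' -> P i K g -> P i K' g) ->
  (forall i, i \in s -> exists K, 0 <= K /\ ev (P i K)) ->
  exists K, 0 <= K /\ ev (fun g => forall i, i \in s -> P i K g).
Proof.
move=> mono; elim: s => [|a s IH] H.
  by exists 0; split => //; exists 1 => // g _ _ i; rewrite in_nil.
have [Ka [Ka0 eva]] := H a (mem_head _ _).
have [Ks [Ks0 evs]] : exists K, 0 <= K /\ ev (fun g => forall i, i \in s -> P i K g).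
  by apply: IH => i iS; apply: H; rewrite in_cons iS orbT.
exists (Ka + Ks); split; first lra.
apply: ev_mono (ev_and eva evs) => g _ [h1 h2] i; rewrite in_cons => /orP[/eqP->|iS].
  by apply: mono h1; lra.
by apply: mono (h2 i iS); lra.
Qed.

Lemma unif_fin (I : finType) (P : I -> R -> C -> Prop) :
  (forall i K K' g, K <= K' -> P i K g -> P i K' g) ->
  (forall i, exists K, 0 <= K /\ ev (P i K)) ->
  exists K, 0 <= K /\ ev (fun g => forall i, P i K g).
Proof.
move=> mono H; have [K [K0 e]] := unif_seq (s := enum I) mono (fun i _ => H i).
by exists K; split => //; apply: ev_mono e => g _ h i; apply: h; rewrite mem_enum.
Qed.

Lemma ev_ltc (K0 d : R) : 0 <= K0 -> 0 < d -> ev (fun g => K0 * nc g < d).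
Proof.
move=> K00 d0; have p : 0 < d / (K0 + 1) by rewrite divr_gt0 //; lra.
exists (d / (K0 + 1)) => // g g0 h; have G0 := nc_gt0 g0.
move: h; rewrite ltr_pdivlMr; last lra.
have -> : nc g * (K0 + 1) = K0 * nc g + nc g by ring.
lra.
Qed.

End Unif.

Section Swap.
Variable R : realType.
Local Notation C := R[i].
Local Notation nc := (@nc R).
Variables (S1 S2 : finType) (m1 : S1 -> nat) (zp1 : S1 -> C) (l1 : S1 -> nat -> C)
  (m2 : S2 -> nat) (zp2 : S2 -> C) (l2 : S2 -> nat -> C) (linf : C).

Lemma swap_zero g y : is_zero12 m2 zp2 l2 m1 zp1 l1 linf (- g) y ->
  is_zero12 m1 zp1 l1 m2 zp2 l2 linf g (y + g^-1).
Proof.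
move=> [h1 [h2 h3]]; split.
  move=> a; apply: contraNneq (h2 a) => e; rewrite invrN.
  by apply/eqP; rewrite -e addrK.
split.
  move=> b; apply: contraNneq (h1 b) => e; apply/eqP.
  by move/(congr1 (fun z => z - g^-1)): e; rewrite !addrK.
move: h3; rewrite /phi12 invrN opprK addrK => <-.
by rewrite [chi m1 _ _ _ + _]addrC.
Qed.

Lemma cluster2 (zeta : C) : linf != 0 -> (forall b, zeta != zp2 b) ->
  chi m2 zp2 l2 zeta = linf -> dchi m2 zp2 l2 zeta != 0 ->
  exists K : R, 0 <= K /\ ev (fun g => exists r,
    is_zero12 m1 zp1 l1 m2 zp2 l2 linf g r /\ nc (r - (g^-1 + zeta)) <= K * nc g).
Proof.
move=> l0 hz hphi hd.
have [K [K0 e]] := cluster m1 zp1 l1 l0 hz hphi hd.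
exists K; split => //; apply: ev_mono (ev_neg e) => g _ [r [hr1 hr2]].
exists (r + g^-1); split; first exact: swap_zero.
have -> : r + g^-1 - (g^-1 + zeta) = r - zeta by ring.
by rewrite ncN in hr2.
Qed.

End Swap.

Section Count.
Variable R : realType.
Local Notation C := R[i].
Local Notation nc := (@nc R).
Variables (S1 S2 : finType) (m1 : S1 -> nat) (zp1 : S1 -> C) (l1 : S1 -> nat -> C)
  (m2 : S2 -> nat) (zp2 : S2 -> C) (l2 : S2 -> nat -> C) (linf : C).

Local Notation mT := (mT m1 m2).
Local Notation zpT := (zpT zp1 zp2).
Local Notation lT := (lT l1 l2).
Local Notation Mt := (\sum_(a : S1) m1 a + \sum_(b : S2) m2 b)%N.

Lemma count_roots (g : C) (z : 'I_Mt -> C) : linf != 0 -> injective z ->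
  (forall k, is_zero12 m1 zp1 l1 m2 zp2 l2 linf g (z k)) ->
  (forall x, is_zero12 m1 zp1 l1 m2 zp2 l2 linf g x -> exists k, z k = x) /\
  (forall k, dphi12 m1 zp1 l1 m2 zp2 l2 g (z k) != 0).
Proof.
move=> l0 zi zz.
set Q := Qp mT (zpT g) lT linf.
have Q0 : Q != 0 := Qp_neq0 mT (zpT g) lT l0.
have Qsize : size Q = Mt.+1 by rewrite Qp_size // MsumT.
have rootQ : forall x, is_zero12 m1 zp1 l1 m2 zp2 l2 linf g x -> root Q x.
  move=> x /zeroT [hp hphi]; rewrite /root (Qp_eval mT lT linf hp) hphi mulr0.
  by [].
set s0 := [seq z k | k <- enum 'I_Mt].
have us0 : uniq s0 by rewrite map_inj_uniq // enum_uniq.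
have ss0 : size s0 = Mt by rewrite size_map size_enum_ord.
have rs0 : all (root Q) s0.
  by apply/allP => y /mapP [k _ ->]; apply: rootQ.
split.
  move=> x zx; case: (boolP (x \in s0)) => [/mapP [k _ ->]|xn]; first by exists k.
  exfalso.
  have := max_poly_roots Q0 (rs := x :: s0); rewrite /= rootQ // rs0 xn us0 ss0 Qsize.
  by rewrite ltnn => /(_ isT isT).
move=> k.
set r := z k.
have [hp hphi] := (zeroT m1 zp1 l1 m2 zp2 l2 linf g (z k)).1 (zz k).
have [rs Qrs] := closed_field_poly_normal Q.
have lc0 : lead_coef Q != 0 by rewrite lead_coef_eq0.
have rsize : size rs = Mt.
  by move: Qsize; rewrite Qrs size_scale // size_prod_XsubC => -[].
set P := \prod_(w <- rs) ('X - w%:P) in Qrs.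
have sub : {subset s0 <= rs}.
  move=> y ys; have := allP rs0 y ys; rewrite /root Qrs hornerZ mulf_eq0 (negbTE lc0) /=.
  by rewrite -/(root P y) root_prod_XsubC.
have urs : uniq rs by apply: (leq_size_uniq us0 sub); rewrite rsize ss0.
have rin : r \in rs by apply: sub; apply/mapP; exists k; rewrite ?mem_enum.
have HP : P = ('X - r%:P) * \prod_(w <- rem r rs) ('X - w%:P).
  by rewrite /P (perm_big _ (perm_to_rem rin)) big_cons.
have Pd : P^`().[r] != 0.
  rewrite HP derivM derivXsubC mul1r !hornerE subrr mul0r addr0.
  by rewrite -/(root _ r) root_prod_XsubC mem_rem_uniqF.
have Qd : Q^`().[r] != 0.
  by rewrite Qrs derivZ hornerZ mulf_neq0.
move: Qd; rewrite (Qp_deriv mT lT linf hp) hphi mulr0 add0r dphiT.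
by apply: contraNneq => ->; rewrite mulr0.
Qed.

End Count.

Section Conv.
Variable R : realType.
Local Notation C := R[i].
Local Notation nc := (@nc R).

Lemma conv_le (x g : C) (K : R) : nc x <= K * nc g -> `|x| <= rC K * `|g|.
Proof. by rewrite !ncE; have -> : rC K = (K%:C)%C by []; rewrite -rmorphM lecR. Qed.

Lemma conv_le_inv (x g : C) (K : R) : `|x| <= rC K * `|g| -> nc x <= K * nc g.
Proof. by rewrite !ncE; have -> : rC K = (K%:C)%C by []; rewrite -rmorphM lecR. Qed.

Lemma conv_lt (g : C) (d : R) : `|g| < rC d -> nc g < d.
Proof. by rewrite !ncE; have -> : rC d = (d%:C)%C by []; rewrite ltcR. Qed.

Lemma conv_lt_inv (g : C) (d : R) : nc g < d -> `|g| < rC d.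
Proof. by rewrite !ncE; have -> : rC d = (d%:C)%C by []; rewrite ltcR. Qed.

End Conv.

Local Close Scope complex_scope.

Theorem lemmaC2 (R : realType) (linf : R[i])
  (S1 S2 : finType)
  (m1 : S1 -> nat) (zp1 : S1 -> R[i]) (l1 : S1 -> nat -> R[i])
  (m2 : S2 -> nat) (zp2 : S2 -> R[i]) (l2 : S2 -> nat -> R[i])
  (zeta1 : 'I_(\sum_(a : S1) m1 a) -> R[i])
  (zeta2 : 'I_(\sum_(b : S2) m2 b) -> R[i]) :
  linf != 0 ->
  (forall a, (0 < m1 a)%N) -> (forall b, (0 < m2 b)%N) ->
  injective zp1 -> injective zp2 ->
  (forall a, l1 a (m1 a).-1 != 0) -> (forall b, l2 b (m2 b).-1 != 0) ->
  (* the zeros of phi_1 are exactly the zeta1 i, and they are simple *)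
  labelling (is_zero1 m1 zp1 l1 linf) zeta1 ->
  (forall i, simple_zero1 m1 zp1 l1 linf (zeta1 i)) ->
  (* the zeros of phi_2 are exactly the zeta2 i, and they are simple *)
  labelling (is_zero1 m2 zp2 l2 linf) zeta2 ->
  (forall i, simple_zero1 m2 zp2 l2 linf (zeta2 i)) ->
  let M1 := (\sum_(a : S1) m1 a)%N in
  let M2 := (\sum_(b : S2) m2 b)%N in
  let Z gam := is_zero12 m1 zp1 l1 m2 zp2 l2 linf gam in
  let asympt (zeta : R[i] -> 'I_(M1 + M2) -> R[i]) :=
    exists (delta K : R), 0 < delta /\
      forall gam : R[i], gam != 0 -> `|gam| < rC delta ->
        labelling (Z gam) (zeta gam) /\
        (forall i : 'I_M1,
            `|zeta gam (lshift M2 i) - zeta1 i| <= rC K * `|gam|) /\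
        (forall j : 'I_M2,
            `|zeta gam (rshift M1 j) - (gam^-1 + zeta2 j)| <= rC K * `|gam|) in
  exists zeta : R[i] -> 'I_(M1 + M2) -> R[i],
    (* existence of a labelling with the asymptotics, with simple zeros *)
    asympt zeta /\
    (exists delta : R, 0 < delta /\
      forall gam : R[i], gam != 0 -> `|gam| < rC delta ->
        forall i, simple_zero12 m1 zp1 l1 m2 zp2 l2 linf gam (zeta gam i)) /\
    (* uniqueness: any labelling with these asymptotics agrees with zeta
       for gamma small enough *)
    (forall zeta' : R[i] -> 'I_(M1 + M2) -> R[i],
       asympt zeta' ->
       exists delta : R, 0 < delta /\
         forall gam : R[i], gam != 0 -> `|gam| < rC delta -> zeta' gam = zeta gam).
Proof.
move=> l0 _ _ _ _ _ _ [zi1 [zz1 _]] hs1 [zi2 [zz2 _]] hs2 M1 M2 Z asympt.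
pose P1 (i : 'I_M1) (K : R) (g : R[i]) := exists r,
  is_zero12 m1 zp1 l1 m2 zp2 l2 linf g r /\ nc (r - zeta1 i) <= K * nc g.
have [K1 [K10 e1]] : exists K, 0 <= K /\ ev (fun g => forall i, P1 i K g).
  apply: unif_fin => [i K K' g hK [r [h1 h2]]|i].
    by exists r; split => //; apply: le_trans h2 _; apply: ler_wpM2r; [exact: nc_ge0|exact: hK].
  have [[hp hphi] hd] := hs1 i.
  rewrite /P1; apply: cluster l0 hp _ hd; apply/eqP; rewrite -subr_eq0; apply/eqP; exact: hphi.
pose P2 (j : 'I_M2) (K : R) (g : R[i]) := exists r,
  is_zero12 m1 zp1 l1 m2 zp2 l2 linf g r /\ nc (r - (g^-1 + zeta2 j)) <= K * nc g.
have [K2 [K20 e2]] : exists K, 0 <= K /\ ev (fun g => forall j, P2 j K g).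
  apply: unif_fin => [j K K' g hK [r [h1 h2]]|j].
    by exists r; split => //; apply: le_trans h2 _; apply: ler_wpM2r; [exact: nc_ge0|exact: hK].
  have [[hp hphi] hd] := hs2 j.
  rewrite /P2; apply: cluster2 l0 hp _ hd; apply/eqP; rewrite -subr_eq0; apply/eqP; exact: hphi.
set K := K1 + K2.
have K0 : 0 <= K by rewrite /K; lra.
pose tg (g : R[i]) (k : 'I_(M1 + M2)) : R[i] :=
  match split k with inl i => zeta1 i | inr j => g^-1 + zeta2 j end.
have tgl : forall g i, tg g (lshift M2 i) = zeta1 i.
  by move=> g i; rewrite /tg (unsplitK (inl _ i)).
have tgr : forall g j, tg g (rshift M1 j) = g^-1 + zeta2 j.
  by move=> g j; rewrite /tg (unsplitK (inr _ j)).
pose PP g k x := is_zero12 m1 zp1 l1 m2 zp2 l2 linf g x /\ nc (x - tg g k) <= K * nc g.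
have EX : ev (fun g => forall k, exists x, PP g k x).
  apply: ev_mono (ev_and e1 e2) => g _ [h1 h2] k.
  rewrite /PP -(splitK k); case: (split k) => [i|j] /=.
    have [r [r1 r2]] := h1 i; exists r; split => //; rewrite tgl.
    by apply: le_trans r2 _; apply: ler_wpM2r; [exact: nc_ge0|rewrite /K; lra].
  have [r [r1 r2]] := h2 j; exists r; split => //; rewrite tgr.
  by apply: le_trans r2 _; apply: ler_wpM2r; [exact: nc_ge0|rewrite /K; lra].
have sep : forall K0 : R, 0 <= K0 -> ev (fun g => forall k k', k != k' ->
    K0 * nc g < nc (tg g k - tg g k')).
  move=> K' K'0; apply: ev_fin => k; apply: ev_fin => k'.
  have := splitK k; have := splitK k'.
  rewrite /tg; case: (split k) => [i|j] /=; case: (split k') => [i'|j'] /= <- <-.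
  - have [->|ne] := eqVneq i i'; first by exists 1 => // g _ _; rewrite eqxx.
    have d0 : 0 < nc (zeta1 i - zeta1 i').
      by apply: nc_gt0; rewrite subr_eq0; apply: contra ne => /eqP /zi1 ->.
    by apply: ev_mono (ev_ltc K'0 d0) => g _ h _.
  - apply: ev_mono (ev_and (ev_far (zeta1 i - zeta2 j')) (ev_ltc K'0 ltr01)) => g g0 [h1 h2] _.
    have -> : zeta1 i - (g^-1 + zeta2 j') = zeta1 i - zeta2 j' - g^-1 by ring.
    have : 0 <= (2 * nc g)^-1 by rewrite invr_ge0 mulr_ge0 ?nc_ge0.
    lra.
  - apply: ev_mono (ev_and (ev_far (zeta1 i' - zeta2 j)) (ev_ltc K'0 ltr01)) => g g0 [h1 h2] _.
    rewrite ncB.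
    have -> : zeta1 i' - (g^-1 + zeta2 j) = zeta1 i' - zeta2 j - g^-1 by ring.
    have : 0 <= (2 * nc g)^-1 by rewrite invr_ge0 mulr_ge0 ?nc_ge0.
    lra.
  - have [->|ne] := eqVneq j j'; first by exists 1 => // g _ _; rewrite eqxx.
    have d0 : 0 < nc (zeta2 j - zeta2 j').
      by apply: nc_gt0; rewrite subr_eq0; apply: contra ne => /eqP /zi2 ->.
    apply: ev_mono (ev_ltc K'0 d0) => g _ h _.
    by have -> : g^-1 + zeta2 j - (g^-1 + zeta2 j') = zeta2 j - zeta2 j' by ring.
pose zeta g k := epsilon (inhabits (0 : R[i])) (PP g k).
have K20' : 0 <= 2 * K by lra.
have [d d0 Hd] := ev_and EX (sep _ K20').
have good : forall g, g != 0 -> nc g < d ->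
   [/\ forall k, PP g k (zeta g k), injective (zeta g),
       forall x, is_zero12 m1 zp1 l1 m2 zp2 l2 linf g x -> exists k, zeta g k = x &
       forall k, dphi12 m1 zp1 l1 m2 zp2 l2 g (zeta g k) != 0].
  move=> g g0 gd; have [hex hsep] := Hd g g0 gd.
  have hP : forall k, PP g k (zeta g k) by move=> k; apply: epsilon_spec.
  have zinj : injective (zeta g).
    move=> k k' e; apply/eqP; apply: contraT => ne.
    have := hsep k k' ne; have [_ h1] := hP k; have [_ h2] := hP k'.
    rewrite e in h1.
    have := ncD (tg g k - zeta g k') (zeta g k' - tg g k').
    rewrite addrA subrK ncB; lra.
  have [hs hsimple] := count_roots (z := zeta g) l0 zinj (fun k => (hP k).1).
  by split.
exists zeta; split.
  exists d, K; split => // gam g0 gd; have [hP zinj hs hsimple] := good gam g0 (conv_lt gd).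
  split; first by split => //; split => // k; exact: (hP k).1.
  split => [i|j]; apply: conv_le.
    by have [_ h] := hP (lshift M2 i); rewrite tgl in h.
  by have [_ h] := hP (rshift M1 j); rewrite tgr in h.
split.
  exists d; split => // gam g0 gd; have [hP zinj hs hsimple] := good gam g0 (conv_lt gd).
  move=> k; split; [exact: (hP k).1 | exact: hsimple].
move=> zeta' [d' [K' [d'0 H']]].
have K'0 : 0 <= K + `|K'| by rewrite addr_ge0.
have [d2 d20 Hd2] := ev_and (ev_and (sep _ K'0) (ev_le d'0)) (ev_le d0).
exists (Num.min d2 (Num.min d d')); split; first by rewrite !lt_min d20 d0 d'0.
move=> gam g0 /conv_lt; rewrite !lt_min => /and3P [gd2 gd gd'].
have [[hsep _] _] := Hd2 gam g0 gd2.
have [hP zinj hs hsimple] := good gam g0 gd.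
have [[zinj' [zz' zs']] [b1 b2]] := H' gam g0 (conv_lt_inv gd').
apply: functional_extensionality => k.
have hk : nc (zeta' gam k - tg gam k) <= `|K'| * nc gam.
  rewrite -(splitK k); case: (split k) => [i|j] /=.
    rewrite tgl; apply: le_trans (conv_le_inv (b1 i)) _.
    by apply: ler_wpM2r; [exact: nc_ge0|exact: ler_norm].
  rewrite tgr; apply: le_trans (conv_le_inv (b2 j)) _.
  by apply: ler_wpM2r; [exact: nc_ge0|exact: ler_norm].
have [k'' ek''] := hs _ (zz' k).
have [_ h''] := hP k''.
rewrite ek'' in h''.
have [ekk|ne] := eqVneq k k''; first by rewrite -ekk in ek''; rewrite ek''.
exfalso; have := hsep k k'' ne.
have := ncD (tg gam k - zeta' gam k) (zeta' gam k - tg gam k'').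
rewrite addrA subrK ncB; lra.
Qed.
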